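(* Let $K\in\mathbb{N}^*$. For every $p\in\mathbb{N}^*$ and every real-valued $\mu\in C_c^\infty(0,1)$, $$A^p_K(\mu)=\frac{(-1)^{p-1}}2\big\langle[\operatorname{ad}_A^{p-1}(\mu),\operatorname{ad}_A^p(\mu)]\varphi_1,\varphi_K\big\rangle.$$
   Context: $A=-d^2/dx^2$, acting on smooth functions on $[0,1]$; $\mu$ is identified with the multiplication operator $f\mapsto\mu f$; $[P,Q]=PQ-QP$, $\operatorname{ad}_A^0(\mu)=\mu$, $\operatorname{ad}_A^{k+1}(\mu)=[A,\operatorname{ad}_A^k(\mu)]$. $\varphi_j=\sqrt2\sin(j\pi x)$, $\lambda_j=(j\pi)^2$, $\langle f,g\rangle=\int_0^1f\bar g$, $c_j=\langle\mu\varphi_1,\varphi_j\rangle\langle\mu\varphi_K,\varphi_j\rangle$, and $A^p_K(\mu)=(-1)^{p-1}\sum_{j\ge1}(\lambda_j-\frac{\lambda_1+\lambda_K}2)(\lambda_K-\lambda_j)^{p-1}(\lambda_j-\lambda_1)^{p-1}c_j$ (absolutely convergent for such $\mu$). *)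

(* Defs.v *)
From Stdlib Require Import Reals.
From Coquelicot Require Import Coquelicot.
Open Scope R_scope.

Definition op := (R -> R) -> (R -> R).

Definition opA : op := fun f x => - Derive_n f 2 x.

Definition mulop (mu : R -> R) : op := fun f x => mu x * f x.

Definition comm (P Q : op) : op := fun f x => P (Q f) x - Q (P f) x.

Fixpoint adA (k : nat) (mu : R -> R) : op :=
  match k with
  | O => mulop mu
  | S k' => comm opA (adA k' mu)
  end.

Definition phi (j : nat) (x : R) : R := sqrt 2 * sin (INR j * PI * x).
Definition lam (j : nat) : R := (INR j * PI) ^ 2.

Definition inner (f g : R -> R) : R := RInt (fun x => f x * g x) 0 1.

Definition cj (mu : R -> R) (K j : nat) : R :=
  inner (fun x => mu x * phi 1 x) (phi j) * inner (fun x => mu x * phi K x) (phi j).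

(* general term of the series defining A^p_K(mu), index j >= 1 *)
Definition AKterm (p K : nat) (mu : R -> R) (j : nat) : R :=
  (lam j - (lam 1 + lam K) / 2) * (lam K - lam j) ^ (p - 1)
  * (lam j - lam 1) ^ (p - 1) * cj mu K j.

Definition AK (p K : nat) (mu : R -> R) : R :=
  (-1) ^ (p - 1) * Series (fun n => AKterm p K mu (S n)).

(* mu in C_c^infty(0,1), real valued (extended by 0 to all of R) *)
Definition smooth_compact_01 (mu : R -> R) : Prop :=
  (forall n x, ex_derive_n mu n x) /\
  exists a b, 0 < a /\ a <= b /\ b < 1 /\
    forall x, (x < a \/ b < x) -> mu x = 0.

(* Main.v *)
Require Import Defs.
From Stdlib Require Import Reals Lra Lia FunctionalExtensionality.
From Coquelicot Require Import Coquelicot.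
Open Scope R_scope.
Ltac req := intros; match goal with |- ?a = ?b => change (@eq R a b) end.

Definition smooth (f : R -> R) := forall n x, ex_derive_n f n x.

Lemma Derive_n_S (h : R -> R) m : Derive_n h (S m) = Derive_n (Derive h) m.
Proof. induction m. reflexivity.
  apply functional_extensionality; intro x.
  change (Derive (Derive_n h (S m)) x = Derive (Derive_n (Derive h) m) x).
  now rewrite IHm. Qed.

Lemma peel1 h n x : (forall y, ex_derive h y) -> ex_derive_n (Derive h) n x ->
  ex_derive_n h (S n) x.
Proof. intros H1 H2. destruct n. apply H1.
  change (ex_derive (Derive_n h (S n)) x). change (ex_derive (Derive_n (Derive h) n) x) in H2.
  rewrite (Derive_n_S h n). exact H2. Qed.

Lemma smooth_peel h : (forall y, ex_derive h y) -> smooth (Derive h) -> smooth h.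
Proof. intros H1 H2 n x. destruct n. exact I. apply peel1; auto. Qed.

Lemma smooth_ex_derive f x : smooth f -> ex_derive f x.
Proof. intros H. exact (H 1%nat x). Qed.

Lemma smooth_Derive f : smooth f -> smooth (Derive f).
Proof. intros H n x. destruct n. exact I.
  change (ex_derive (Derive_n (Derive f) n) x). rewrite <- Derive_n_S.
  exact (H (S (S n)) x). Qed.

Lemma smooth_Derive_n f k : smooth f -> smooth (Derive_n f k).
Proof. intros H. induction k. intros n x. apply (ex_derive_n_ext f). reflexivity. apply H.
  intros n x. apply (ex_derive_n_ext (Derive (Derive_n f k))). reflexivity.
  apply smooth_Derive. exact IHk. Qed.

Lemma smooth_continuous f x : smooth f -> continuous f x.
Proof. intros H. exact (ex_derive_continuous f x (smooth_ex_derive f x H)). Qed.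

Lemma smooth_ext f g : (forall x, f x = g x) -> smooth f -> smooth g.
Proof. intros E H n x. apply (ex_derive_n_ext f); auto. Qed.

Lemma smooth_plus f g : smooth f -> smooth g -> smooth (fun x => f x + g x).
Proof. intros Hf Hg n x. apply ex_derive_n_plus; apply filter_forall; intros; auto. Qed.

Lemma smooth_const c : smooth (fun _ => c).
Proof. intros n x. apply ex_derive_n_const. Qed.

Lemma smooth_scal c f : smooth f -> smooth (fun x => c * f x).
Proof. intros H n x. apply ex_derive_n_scal_l. apply H. Qed.

Lemma smooth_opp f : smooth f -> smooth (fun x => - f x).
Proof. intros H n x. apply ex_derive_n_opp. apply H. Qed.

Lemma smooth_minus f g : smooth f -> smooth g -> smooth (fun x => f x - g x).
Proof. intros. apply smooth_plus; auto. apply smooth_opp; auto. Qed.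

Lemma Derive_mult_fun f g : smooth f -> smooth g ->
  Derive (fun x => f x * g x) = (fun x => Derive f x * g x + f x * Derive g x).
Proof. intros. apply functional_extensionality; intro x.
  apply Derive_mult; apply smooth_ex_derive; auto. Qed.

Lemma smooth_mult_aux n : forall m, (m <= n)%nat -> forall f g, smooth f -> smooth g ->
  forall x, ex_derive_n (fun x => f x * g x) m x.
Proof. induction n; intros m Hm f g Hf Hg x.
  - replace m with 0%nat by lia. exact I.
  - destruct m. exact I. destruct m.
    + simpl. apply ex_derive_mult; apply smooth_ex_derive; auto.
    + apply peel1. intros; apply ex_derive_mult; apply smooth_ex_derive; auto.
      rewrite Derive_mult_fun by auto.
      apply ex_derive_n_plus; apply filter_forall; intros y k Hk;
      apply IHn; try lia; auto using smooth_Derive.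
Qed.

Lemma smooth_mult f g : smooth f -> smooth g -> smooth (fun x => f x * g x).
Proof. intros Hf Hg n x. apply (smooth_mult_aux n n); auto. Qed.

Lemma Derive_sin c w : Derive (fun x => c * sin (w * x)) = (fun x => (c * w) * cos (w * x)).
Proof. apply functional_extensionality; intro x. apply is_derive_unique.
  auto_derive; auto. ring. Qed.
Lemma Derive_cos c w : Derive (fun x => c * cos (w * x)) = (fun x => (- (c * w)) * sin (w * x)).
Proof. apply functional_extensionality; intro x. apply is_derive_unique.
  auto_derive; auto. ring. Qed.

Lemma sincos_smooth n : forall c w x,
  ex_derive_n (fun x => c * sin (w * x)) n x /\ ex_derive_n (fun x => c * cos (w * x)) n x.
Proof. induction n; intros c w x. split; exact I.
  split; apply peel1.
  - intros; auto_derive; auto.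
  - rewrite Derive_sin. exact (proj2 (IHn _ _ _)).
  - intros; auto_derive; auto.
  - rewrite Derive_cos. exact (proj1 (IHn _ _ _)).
Qed.

Lemma phi_smooth j : smooth (phi j).
Proof. intros n x. apply (sincos_smooth n (sqrt 2) (INR j * PI) x). Qed.

Lemma opA_phi j : opA (phi j) = fun x => lam j * phi j x.
Proof. apply functional_extensionality; intro x. unfold opA, lam, phi.
  change (- Derive (Derive (fun x => sqrt 2 * sin (INR j * PI * x))) x =
    (INR j * PI) ^ 2 * (sqrt 2 * sin (INR j * PI * x))).
  rewrite Derive_sin, Derive_cos. ring. Qed.

Lemma opA_smooth f : smooth f -> smooth (opA f).
Proof. intros H. unfold opA. apply smooth_opp. apply smooth_Derive_n, H. Qed.

Definition supp (f : R -> R) a b := forall x, x < a \/ b < x -> f x = 0.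

Lemma supp_Derive_n f a b n : supp f a b -> supp (Derive_n f n) a b.
Proof. intros H x Hx.
  assert (L : locally x (fun t => f t = (fun _ => 0) t)).
  { destruct Hx as [Hx|Hx].
    - apply (filter_imp (fun u => u < a)). intros; apply H; auto. apply open_lt; auto.
    - apply (filter_imp (fun u => b < u)). intros; apply H; auto. apply open_gt; auto. }
  rewrite (Derive_n_ext_loc _ _ n x L). destruct n. reflexivity. apply Derive_n_const. Qed.

Lemma supp_opA f a b : supp f a b -> supp (opA f) a b.
Proof. intros H x Hx. unfold opA. rewrite (supp_Derive_n f a b 2 H x Hx). ring. Qed.

Section AD.
Variable mu : R -> R.

Lemma adA_S k f : adA (S k) mu f = fun x => opA (adA k mu f) x - adA k mu (opA f) x.
Proof. reflexivity. Qed.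

Lemma adA_supp a b k : supp mu a b -> forall f, supp (adA k mu f) a b.
Proof. intros Hm. induction k; intros f x Hx.
  - simpl. unfold mulop. rewrite Hm; auto. ring.
  - rewrite adA_S. rewrite (supp_opA _ a b (IHk f) x Hx), (IHk (opA f) x Hx). ring. Qed.

Lemma adA_smooth k : smooth mu -> forall f, smooth f -> smooth (adA k mu f).
Proof. intros Hm. induction k; intros f Hf.
  - simpl. unfold mulop. apply smooth_mult; auto.
  - rewrite adA_S. apply smooth_minus. apply opA_smooth; auto. apply IHk, opA_smooth, Hf. Qed.

Lemma opA_scal c f : opA (fun x => c * f x) = fun x => c * opA f x.
Proof. apply functional_extensionality; intro x. unfold opA. rewrite Derive_n_scal_l. ring. Qed.

Lemma adA_scal k : forall c f, adA k mu (fun x => c * f x) = fun x => c * adA k mu f x.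
Proof. induction k; intros c f.
  - simpl. unfold mulop. apply functional_extensionality; intro; ring.
  - rewrite !adA_S, IHk, !opA_scal, IHk. apply functional_extensionality; intro; ring. Qed.
End AD.

Lemma ex_RInt_sm f a b : smooth f -> ex_RInt f a b.
Proof. intros H. apply (ex_RInt_continuous (V:=R_CompleteNormedModule)). intros; apply smooth_continuous, H. Qed.

Lemma RInt_minus_sm f g a b : smooth f -> smooth g ->
  RInt (fun x => f x - g x) a b = RInt f a b - RInt g a b.
Proof. intros. apply (RInt_minus f g); apply ex_RInt_sm; auto. Qed.

Lemma RInt_plus_sm f g a b : smooth f -> smooth g ->
  RInt (fun x => f x + g x) a b = RInt f a b + RInt g a b.
Proof. intros. apply (RInt_plus f g); apply ex_RInt_sm; auto. Qed.

Lemma RInt_scal_sm f c a b : smooth f -> RInt (fun x => c * f x) a b = c * RInt f a b.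
Proof. intros. apply (RInt_scal f a b c); apply ex_RInt_sm; auto. Qed.

Lemma inner_minus f g h : smooth f -> smooth g -> smooth h ->
  inner (fun x => f x - g x) h = inner f h - inner g h.
Proof. intros. unfold inner. rewrite <- RInt_minus_sm by (apply smooth_mult; auto).
  apply RInt_ext; req; ring. Qed.

Lemma inner_scal c f h : smooth f -> smooth h -> inner (fun x => c * f x) h = c * inner f h.
Proof. intros. unfold inner. rewrite <- RInt_scal_sm by (apply smooth_mult; auto).
  apply RInt_ext; req; ring. Qed.

Lemma inner_scal_r c f h : smooth f -> smooth h -> inner f (fun x => c * h x) = c * inner f h.
Proof. intros. unfold inner. rewrite <- RInt_scal_sm by (apply smooth_mult; auto).
  apply RInt_ext; req; ring. Qed.

Lemma inner_sym f g : inner f g = inner g f.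
Proof. unfold inner. apply RInt_ext; req; ring. Qed.

Lemma RInt_opp_sm f a b : smooth f -> RInt (fun x => - f x) a b = - RInt f a b.
Proof. intros. replace (fun x => - f x) with (fun x => (-1) * f x) by (apply functional_extensionality; intro; ring).
  rewrite RInt_scal_sm; auto. change (@eq R (-1 * RInt f a b) (- RInt f a b)). ring. Qed.

Lemma opA_selfadj f g a b : smooth f -> smooth g -> supp f a b -> 0 < a -> b < 1 ->
  inner (opA f) g = inner f (opA g).
Proof. intros Hf Hg Hs Ha Hb.
  set (W := fun x => Derive f x * g x - f x * Derive g x).
  assert (HI : is_RInt (fun x => Derive_n f 2 x * g x - f x * Derive_n g 2 x) 0 1 (minus (W 1) (W 0))).
  { apply (is_RInt_derive W).
    - intros x _. unfold W. auto_derive.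
      + repeat split; try apply smooth_ex_derive; auto using smooth_Derive.
      + simpl. change (fun x0 => f x0) with f. change (fun x0 => g x0) with g.
        change (Derive (fun x0 => Derive f x0)) with (Derive (Derive f)).
        change (Derive (fun x0 => Derive g x0)) with (Derive (Derive g)). ring.
    - intros x _. apply smooth_continuous. apply smooth_minus; apply smooth_mult; auto;
      apply smooth_Derive_n; auto. }
  assert (W0 : W 0 = 0).
  { unfold W. rewrite (Hs 0) by lra. change (Derive f 0) with (Derive_n f 1 0).
    rewrite (supp_Derive_n f a b 1 Hs 0) by lra. ring. }
  assert (W1 : W 1 = 0).
  { unfold W. rewrite (Hs 1) by lra. change (Derive f 1) with (Derive_n f 1 1).
    rewrite (supp_Derive_n f a b 1 Hs 1) by lra. ring. }
  rewrite W0, W1 in HI. pose proof (is_RInt_unique (V:=R_CompleteNormedModule) _ _ _ _ HI) as HI2; clear HI; rename HI2 into HI.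
  rewrite RInt_minus_sm in HI by (apply smooth_mult; auto; apply smooth_Derive_n; auto).
  unfold inner, opA.
  replace (fun x => - Derive_n f 2 x * g x) with (fun x => (-1) * (Derive_n f 2 x * g x))
    by (apply functional_extensionality; intro; ring).
  replace (fun x => f x * - Derive_n g 2 x) with (fun x => (-1) * (f x * Derive_n g 2 x))
    by (apply functional_extensionality; intro; ring).
  rewrite !RInt_scal_sm by (apply smooth_mult; auto; apply smooth_Derive_n; auto).
  change (minus 0 0) with (0 - 0) in HI. lra.
Qed.

Section AD2.
Variables (mu : R -> R) (a b : R).
Hypotheses (Hm : smooth mu) (Hs : supp mu a b) (Ha : 0 < a) (Hb : b < 1).

Lemma inner_minus_r f g h : smooth f -> smooth g -> smooth h ->
  inner h (fun x => f x - g x) = inner h f - inner h g.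
Proof. intros. rewrite !(inner_sym h). apply inner_minus; auto. Qed.

Lemma ad_phi k i j : inner (adA k mu (phi i)) (phi j) =
  (lam j - lam i) ^ k * inner (mulop mu (phi i)) (phi j).
Proof. induction k.
  - simpl. ring.
  - rewrite adA_S.
    assert (S1 : smooth (adA k mu (phi i))) by exact (adA_smooth mu k Hm _ (phi_smooth i)).
    assert (S2 : smooth (adA k mu (opA (phi i)))) by exact (adA_smooth mu k Hm _ (opA_smooth _ (phi_smooth i))).
    rewrite inner_minus; [| exact (opA_smooth _ S1) | exact S2 | exact (phi_smooth j)].
    rewrite (opA_selfadj _ _ a b); [| exact S1 | exact (phi_smooth j) | exact (adA_supp mu a b k Hs _) | exact Ha | exact Hb].
    rewrite opA_phi, opA_phi, adA_scal.
    rewrite inner_scal_r, inner_scal; [| exact S1 | exact (phi_smooth j) | exact S1 | exact (phi_smooth j)].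
    rewrite IHk. simpl. ring.
Qed.
Lemma ad_adj k : forall h g, smooth h -> supp h a b -> smooth g ->
  inner (adA k mu h) g = (-1) ^ k * inner h (adA k mu g).
Proof. induction k; intros h g Hh Hsh Hg.
  - simpl. unfold inner, mulop. rewrite Rmult_1_l. apply RInt_ext. intros.
    change (@eq R (mu x * h x * g x) (h x * (mu x * g x))). ring.
  - rewrite !adA_S.
    assert (S1 : smooth (adA k mu h)) by exact (adA_smooth mu k Hm _ Hh).
    assert (S2 : smooth (adA k mu (opA h))) by exact (adA_smooth mu k Hm _ (opA_smooth _ Hh)).
    assert (S3 : smooth (adA k mu g)) by exact (adA_smooth mu k Hm _ Hg).
    assert (S4 : smooth (adA k mu (opA g))) by exact (adA_smooth mu k Hm _ (opA_smooth _ Hg)).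
    rewrite inner_minus; [| exact (opA_smooth _ S1) | exact S2 | exact Hg].
    rewrite inner_minus_r; [| exact (opA_smooth _ S3) | exact S4 | exact Hh].
    rewrite (opA_selfadj _ _ a b); [| exact S1 | exact Hg | exact (adA_supp mu a b k Hs _) | exact Ha | exact Hb].
    rewrite (IHk h (opA g) Hh Hsh (opA_smooth _ Hg)).
    rewrite (IHk (opA h) g (opA_smooth _ Hh) (supp_opA _ _ _ Hsh) Hg).
    rewrite (inner_sym h (opA _)).
    rewrite (opA_selfadj _ _ a b); [| exact Hh | exact S3 | exact Hsh | exact Ha | exact Hb].
    rewrite (inner_sym _ h). simpl. ring.
Qed.
End AD2.

Definition Tn (N : nat) (t : R) : R :=
  sum_n (fun n => cos (INR (S n) * t) / (INR (S n)) ^ 2) N.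

Lemma Tn_S N t : Tn (S N) t = Tn N t + cos (INR (S (S N)) * t) / (INR (S (S N))) ^ 2.
Proof. unfold Tn. rewrite sum_Sn. reflexivity. Qed.

Lemma INR_S_pos n : 0 < INR (S n).
Proof. apply lt_0_INR; lia. Qed.

Lemma INR_S_ge1 n : 1 <= INR (S n).
Proof. rewrite S_INR. pose proof (pos_INR n). lra. Qed.

Lemma Tn_cauchy k : forall N t,
  Rabs (Tn (N + k) t - Tn N t) <= / INR (S N) - / INR (S (N + k)).
Proof. induction k; intros N t.
  - rewrite Nat.add_0_r. unfold Rminus. rewrite !Rplus_opp_r, Rabs_R0. lra.
  - rewrite Nat.add_succ_r, Tn_S.
    specialize (IHk N t).
    set (c := cos (INR (S (S (N + k))) * t)).
    set (q := INR (S (N + k))).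
    assert (Hq : INR (S (S (N + k))) = q + 1) by (unfold q; rewrite (S_INR (S (N+k))); ring).
    rewrite Hq.
    assert (q1 : 1 <= q) by apply INR_S_ge1.
    assert (Hc : Rabs (c / (q + 1) ^ 2) <= / q - / (q + 1)).
    { rewrite Rabs_div by (apply pow_nonzero; lra). rewrite Rabs_pos_eq with (x := (q+1)^2) by (apply pow_le; lra).
      apply Rle_trans with (1 / (q+1)^2).
      apply Rmult_le_compat_r. left; apply Rinv_0_lt_compat, pow_lt; lra.
      apply Rabs_le, COS_bound.
      replace (/ q - / (q+1)) with (1 / (q * (q+1))) by (field; lra).
      apply Rmult_le_compat_l. lra. apply Rinv_le_contravar. apply Rmult_lt_0_compat; lra.
      simpl. nra. }
    replace (Tn (N + k) t + c / (q + 1) ^ 2 - Tn N t)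
      with ((Tn (N + k) t - Tn N t) + c / (q + 1) ^ 2) by ring.
    eapply Rle_trans. apply Rabs_triang. fold q in IHk. lra.
Qed.

Lemma Tn_cauchy' N M t : (N <= M)%nat -> Rabs (Tn M t - Tn N t) <= / INR (S N).
Proof. intros H. replace M with (N + (M - N))%nat by lia.
  eapply Rle_trans. apply Tn_cauchy. pose proof (INR_S_pos (N + (M - N))).
  pose proof (Rinv_0_lt_compat _ H0). lra. Qed.

Lemma small_inv eps : 0 < eps -> exists N, / INR (S N) < eps.
Proof. intros H. destruct (archimed_cor1 eps H) as [N [H1 H2]].
  exists (N - 1)%nat. replace (S (N - 1)) with N by lia. exact H1. Qed.

Lemma Tn_ex t : ex_finite_lim_seq (fun N => Tn N t).
Proof. apply ex_lim_seq_cauchy_corr. intros eps.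
  destruct (small_inv eps (cond_pos eps)) as [N HN]. exists N. intros n m Hn Hm.
  destruct (Nat.le_ge_cases n m).
  - rewrite Rabs_minus_sym. eapply Rle_lt_trans. apply Tn_cauchy'; auto.
    eapply Rle_lt_trans; [|exact HN]. apply Rinv_le_contravar. apply INR_S_pos. apply le_INR; lia.
  - eapply Rle_lt_trans. apply Tn_cauchy'; auto.
    eapply Rle_lt_trans; [|exact HN]. apply Rinv_le_contravar. apply INR_S_pos. apply le_INR; lia.
Qed.

Definition Fs (t : R) : R := real (Lim_seq (fun N => Tn N t)).

Lemma Fs_lim t : is_lim_seq (fun N => Tn N t) (Fs t).
Proof. destruct (Tn_ex t) as [l Hl]. unfold Fs. rewrite (is_lim_seq_unique _ _ Hl). exact Hl. Qed.

Lemma Fs_bound N t : Rabs (Fs t - Tn N t) <= / INR (S N).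
Proof.
  assert (H1 : is_lim_seq (fun M => Rabs (Tn (M + N) t - Tn N t)) (Rabs (Fs t - Tn N t))).
  { apply (is_lim_seq_abs _ (Fs t - Tn N t)). apply is_lim_seq_minus'.
    apply (is_lim_seq_incr_n (fun M => Tn M t)). apply Fs_lim. apply is_lim_seq_const. }
  pose proof (is_lim_seq_le _ _ _ _ (fun M => Tn_cauchy' N (M + N) t ltac:(lia)) H1 (is_lim_seq_const _)).
  exact H.
Qed.

Lemma sum_SnR (a : nat -> R) n : sum_n a (S n) = sum_n a n + a (S n).
Proof. exact (sum_Sn (G:=R_AbelianMonoid) a n). Qed.
Lemma sum_OR (a : nat -> R) : sum_n a 0 = a 0%nat.
Proof. exact (sum_O (G:=R_AbelianMonoid) a). Qed.

Lemma sin_nPI n : sin (INR n * PI) = 0.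
Proof. induction n. simpl. rewrite Rmult_0_l. apply sin_0.
  rewrite S_INR. replace ((INR n + 1) * PI) with (INR n * PI + PI) by ring.
  rewrite neg_sin, IHn. ring. Qed.

Lemma term_int th m a b : m <> 0 ->
  is_RInt (fun t => (th - t) * cos (m * t)) a b
   (((th - b) * sin (m * b) / m - cos (m * b) / m ^ 2) - ((th - a) * sin (m * a) / m - cos (m * a) / m ^ 2)).
Proof. intros Hm.
  apply (is_RInt_derive (fun t => (th - t) * sin (m * t) / m - cos (m * t) / m ^ 2)
     (fun t => (th - t) * cos (m * t))).
  - intros x _. auto_derive. auto. field. auto.
  - intros x _. apply (ex_derive_continuous (fun t => (th - t) * cos (m * t))). auto_derive. auto.
Qed.

Lemma half_int th a b :
  is_RInt (fun t => (th - t) * (1/2)) a b ((th - a) ^ 2 / 4 - (th - b) ^ 2 / 4).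
Proof.
  assert (H := is_RInt_derive (fun t => - (th - t) ^ 2 / 4) (fun t => (th - t) * (1/2)) a b).
  replace ((th - a) ^ 2 / 4 - (th - b) ^ 2 / 4) with (minus (- (th - b) ^ 2 / 4) (- (th - a) ^ 2 / 4)).
  apply H.
  - intros x _. auto_derive. auto. field.
  - intros x _. apply (ex_derive_continuous (fun t => (th - t) * (1/2))). auto_derive. auto.
  - unfold minus, plus, opp; simpl. field.
Qed.

Lemma is_RInt_val (f : R -> R) a b (l l' : R) : is_RInt f a b l -> l = l' -> is_RInt f a b l'.
Proof. intros H E; subst; exact H. Qed.

Lemma kernel_int th N :
  is_RInt (fun t => (th - t) * (1/2 + sum_n (fun n => cos (INR (S n) * t)) N)) PI th
    ((th - PI) ^ 2 / 4 + Tn N PI - Tn N th).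
Proof. induction N.
  - assert (H := is_RInt_plus _ _ _ _ _ _ (half_int th PI th) (term_int th (INR 1) PI th ltac:(simpl; lra))).
    eapply is_RInt_ext; [|eapply is_RInt_val; [exact H|]].
    intros x _. rewrite sum_O. unfold plus; simpl. ring.
    unfold Tn. rewrite !sum_O. rewrite (sin_nPI 1). unfold plus; simpl. field.
  - assert (H := is_RInt_plus _ _ _ _ _ _ IHN (term_int th (INR (S (S N))) PI th ltac:(apply not_0_INR; lia))).
    eapply is_RInt_ext; [|eapply is_RInt_val; [exact H|]].
    intros x _. rewrite sum_Sn. unfold plus; simpl. ring.
    rewrite !Tn_S. rewrite (sin_nPI (S (S N))).
    assert (Hm : INR (S (S N)) <> 0) by (apply not_0_INR; lia).
    set (m := INR (S (S N))) in *. unfold plus; simpl. field. auto.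
Qed.

Lemma sin_cos_prod a b : 2 * sin a * cos b = sin (b + a) - sin (b - a).
Proof. rewrite sin_plus, sin_minus. ring. Qed.

Lemma dir N t : 2 * sin (t / 2) * (1 / 2 + sum_n (fun n => cos (INR (S n) * t)) N)
  = sin ((INR N + 3 / 2) * t).
Proof. induction N.
  - rewrite sum_O. replace (2 * sin (t / 2) * (1 / 2 + cos (INR 1 * t)))
      with (sin (t/2) + 2 * sin (t / 2) * cos (INR 1 * t)) by field.
    rewrite sin_cos_prod. simpl.
    replace (1 * t - t / 2) with (t / 2) by field.
    replace (1 * t + t / 2) with ((0 + 3 / 2) * t) by field. ring.
  - rewrite sum_SnR.
    replace (2 * sin (t / 2) * (1 / 2 + (sum_n (fun n => cos (INR (S n) * t)) N + cos (INR (S (S N)) * t))))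
      with (2 * sin (t / 2) * (1 / 2 + sum_n (fun n => cos (INR (S n) * t)) N) + 2 * sin (t / 2) * cos (INR (S (S N)) * t)) by ring.
    rewrite IHN, sin_cos_prod. rewrite !S_INR.
    replace ((INR N + 1 + 1) * t - t / 2) with ((INR N + 3 / 2) * t) by field.
    replace ((INR N + 1 + 1) * t + t / 2) with ((INR N + 1 + 3 / 2) * t) by field. ring.
Qed.

Lemma inv_lim C : is_lim_seq (fun N => C * / INR (S N)) 0.
Proof.
  assert (H : is_lim_seq (fun N => / INR N) 0).
  { replace (Finite 0) with (Rbar_inv p_infty) by reflexivity.
    apply is_lim_seq_inv. apply is_lim_seq_INR. discriminate. }
  apply (is_lim_seq_incr_1 (fun N => / INR N)) in H.
  replace (Finite 0) with (Rbar_mult C 0) by (simpl; f_equal; ring).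
  apply is_lim_seq_scal_l. exact H.
Qed.

Lemma lim_squeeze (u : nat -> R) (l c C : R) : is_lim_seq u l ->
  (forall N, Rabs (c - u N) <= C * / INR (S N)) -> l = c.
Proof. intros Hu HB.
  assert (H1 : is_lim_seq (fun N => Rabs (c - u N)) (Rabs (c - l))).
  { apply (is_lim_seq_abs _ (c - l)). apply is_lim_seq_minus'. apply is_lim_seq_const. exact Hu. }
  pose proof (is_lim_seq_le _ _ _ _ HB H1 (inv_lim C)) as H. simpl in H.
  pose proof (Rabs_pos (c - l)).
  assert (Rabs (c - l) = 0) by lra.
  apply Rabs_eq_0 in H2. lra.
Qed.

Section RL.
Variable th : R.
Hypothesis (H1 : PI < th) (H2 : th < 2 * PI).

Lemma spos t : PI <= t <= th -> 0 < sin (t / 2).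
Proof. intros [Ha Hb]. apply sin_gt_0. pose proof PI_RGT_0. lra. lra. Qed.

Definition w t := (th - t) / (2 * sin (t / 2)).
Definition dw t := - 1 / (2 * sin (t / 2)) - (th - t) * cos (t / 2) / (4 * sin (t / 2) ^ 2).

Lemma w_deriv t : PI <= t <= th -> is_derive w t (dw t).
Proof. intros Ht. pose proof (spos t Ht). unfold w, dw. auto_derive. lra.
  unfold Rdiv in *. field. lra. Qed.

Lemma dw_cont t : PI <= t <= th -> continuous dw t.
Proof. intros Ht. pose proof (spos t Ht). apply (ex_derive_continuous dw).
  unfold dw. auto_derive. unfold Rdiv in *. repeat split; try exact I; apply Rgt_not_eq; nra. Qed.

Lemma w_cont t : PI <= t <= th -> continuous w t.
Proof. intros Ht. apply (ex_derive_continuous w). eexists. apply w_deriv; auto. Qed.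

Lemma cos_cont M t : continuous (fun t => cos (M * t)) t.
Proof. apply (ex_derive_continuous (fun t => cos (M * t))). auto_derive. auto. Qed.
Lemma sin_cont M t : continuous (fun t => sin (M * t)) t.
Proof. apply (ex_derive_continuous (fun t => sin (M * t))). auto_derive. auto. Qed.

Lemma inrange t : Rmin PI th <= t <= Rmax PI th -> PI <= t <= th.
Proof. rewrite Rmin_left, Rmax_right by lra. auto. Qed.

Lemma RL M : 0 < M -> Rabs (RInt (fun t => w t * sin (M * t)) PI th)
   <= (Rabs (w PI) + RInt (fun t => Rabs (dw t)) PI th) / M.
Proof. intros HM.
  set (V := fun t => - w t * cos (M * t) / M).
  assert (HV : is_RInt (fun t => w t * sin (M * t) - dw t * cos (M * t) / M) PI th (minus (V th) (V PI))).
  { apply (is_RInt_derive (V:=R_CompleteNormedModule) V).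
    - intros x Hx. apply inrange in Hx. pose proof (spos x Hx). unfold V, w, dw.
      auto_derive. unfold Rdiv in *. lra. unfold Rdiv in *. field. lra.
    - intros x Hx. apply inrange in Hx.
      apply (continuous_minus (fun t => w t * sin (M * t)) (fun t => dw t * cos (M * t) / M)).
      apply (continuous_mult w). apply w_cont; auto. apply sin_cont.
      apply (continuous_mult (fun t => dw t * cos (M * t))). apply (continuous_mult dw).
      apply dw_cont; auto. apply cos_cont. apply continuous_const. }
  assert (Hc : forall t, PI <= t <= th -> continuous (fun t => dw t * cos (M * t)) t).
  { intros. apply (continuous_mult dw). apply dw_cont; auto. apply cos_cont. }
  assert (Ex : ex_RInt (fun t => dw t * cos (M * t)) PI th).
  { apply (ex_RInt_continuous (V:=R_CompleteNormedModule)). intros; apply Hc, inrange; auto. }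
  set (I1 := RInt (fun t => dw t * cos (M * t)) PI th).
  assert (HI1 := RInt_correct _ _ _ Ex). fold I1 in HI1.
  assert (HS := is_RInt_plus _ _ _ _ _ _ HV (is_RInt_scal _ _ _ (/ M) _ HI1)).
  assert (HS' : is_RInt (fun t => w t * sin (M * t)) PI th (V th - V PI + / M * I1)).
  { eapply is_RInt_ext; [|exact HS]. intros x _. unfold plus, scal, minus, opp, mult; simpl.
    unfold mult; simpl. field. lra. }
  rewrite (is_RInt_unique _ _ _ _ HS').
  assert (Vth : V th = 0). { unfold V, w. unfold Rminus. rewrite Rplus_opp_r. unfold Rdiv. ring. }
  assert (Vpi : Rabs (V PI) <= Rabs (w PI) / M).
  { unfold V. rewrite Rabs_div by lra. rewrite (Rabs_pos_eq M) by lra.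
    apply Rmult_le_compat_r. left; apply Rinv_0_lt_compat; lra.
    rewrite Rabs_mult, Rabs_Ropp. pose proof (Rabs_pos (w PI)).
    assert (Rabs (cos (M * PI)) <= 1) by (apply Rabs_le, COS_bound). nra. }
  assert (AI : Rabs I1 <= RInt (fun t => Rabs (dw t)) PI th).
  { eapply Rle_trans. apply abs_RInt_le. lra. exact Ex.
    apply RInt_le. lra.
    apply (ex_RInt_continuous (V:=R_CompleteNormedModule)). intros; apply continuous_Rabs_comp, Hc, inrange; auto.
    apply (ex_RInt_continuous (V:=R_CompleteNormedModule)). intros; apply continuous_Rabs_comp, dw_cont, inrange; auto.
    intros x _. rewrite Rabs_mult. pose proof (Rabs_pos (dw x)).
    assert (Rabs (cos (M * x)) <= 1) by (apply Rabs_le, COS_bound). nra. }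
  rewrite Vth. eapply Rle_trans. apply Rabs_triang.
  rewrite Rabs_mult, Rabs_pos_eq with (x := / M) by (left; apply Rinv_0_lt_compat; lra).
  rewrite Rminus_0_l, Rabs_Ropp.
  replace ((Rabs (w PI) + RInt (fun t => Rabs (dw t)) PI th) / M) with
    (Rabs (w PI) / M + / M * RInt (fun t => Rabs (dw t)) PI th) by (field; lra).
  apply Rplus_le_compat. exact Vpi. apply Rmult_le_compat_l. left; apply Rinv_0_lt_compat; lra. exact AI.
Qed.
End RL.

Lemma Fs_main th : PI < th < 2 * PI -> Fs th - Fs PI = (th - PI) ^ 2 / 4.
Proof. intros [H1 H2].
  set (C := Rabs (w th PI) + RInt (fun t => Rabs (dw th t)) PI th).
  apply (lim_squeeze (fun N => Tn N th - Tn N PI) _ _ C).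
  - apply is_lim_seq_minus'; apply Fs_lim.
  - intro N.
    assert (E : (th - PI) ^ 2 / 4 - (Tn N th - Tn N PI) =
              RInt (fun t => w th t * sin ((INR N + 3/2) * t)) PI th).
    { rewrite <- (RInt_ext (fun t => (th - t) * (1/2 + sum_n (fun n => cos (INR (S n) * t)) N))).
      rewrite (is_RInt_unique _ _ _ _ (kernel_int th N)). match goal with |- ?a = ?b => change (@eq R a b) end; ring.
      intros x Hx. rewrite Rmin_left, Rmax_right in Hx by lra.
      pose proof (spos th H1 H2 x ltac:(lra)).
      match goal with |- ?a = ?b => change (@eq R a b) end. rewrite <- dir. unfold w. field. lra. }
    rewrite E.
    assert (HM : 0 < INR N + 3/2) by (pose proof (pos_INR N); lra).
    pose proof (RL th H1 H2 _ HM) as HR. fold C in HR.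
    assert (C0 : 0 <= C).
    { pose proof (Rabs_pos (RInt (fun t => w th t * sin ((INR N + 3 / 2) * t)) PI th)).
      assert (0 <= C / (INR N + 3/2)) by lra.
      apply (Rmult_le_compat_r (INR N + 3/2)) in H0; [|lra].
      unfold Rdiv in H0. rewrite Rmult_0_l, Rmult_assoc, Rinv_l, Rmult_1_r in H0; lra. }
    eapply Rle_trans. exact HR. unfold Rdiv. apply Rmult_le_compat_l. exact C0.
    apply Rinv_le_contravar. apply INR_S_pos. rewrite S_INR. lra.
Qed.

Lemma Fs_ext t t' : (forall N, Tn N t = Tn N t') -> Fs t = Fs t'.
Proof. intros H. unfold Fs. f_equal. apply Lim_seq_ext. auto. Qed.

Lemma Tn_neg N t : Tn N (- t) = Tn N t.
Proof. unfold Tn. apply sum_n_ext. intro n. f_equal.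
  replace (INR (S n) * - t) with (- (INR (S n) * t)) by ring. apply cos_neg. Qed.

Lemma Tn_refl N t : Tn N (2 * PI - t) = Tn N t.
Proof. unfold Tn. apply sum_n_ext. intro n. f_equal.
  replace (INR (S n) * (2 * PI - t)) with (- (INR (S n) * t) + 2 * INR (S n) * PI) by ring.
  rewrite cos_period, cos_neg. reflexivity. Qed.

Lemma Fs_formula th : 0 < th < 2 * PI -> Fs th = Fs PI + (th - PI) ^ 2 / 4.
Proof. intros [H1 H2]. destruct (Rtotal_order th PI) as [Hl|[He|Hg]].
  - rewrite <- (Fs_ext (2 * PI - th)) by (intro; apply Tn_refl).
    pose proof (Fs_main (2 * PI - th) ltac:(lra)).
    replace ((th - PI) ^ 2 / 4) with ((2 * PI - th - PI) ^ 2 / 4) by field. lra.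
  - subst. field.
  - pose proof (Fs_main th ltac:(lra)). lra.
Qed.

Definition Kn (N : nat) (x y : R) : R :=
  sum_n (fun n => phi (S n) x * phi (S n) y / lam (S n)) N.

Definition Gf (x y : R) : R := ((1 - Rabs (x - y)) ^ 2 - (1 - x - y) ^ 2) / 4.

Lemma K_term m x y : m <> 0 ->
  sqrt 2 * sin (m * PI * x) * (sqrt 2 * sin (m * PI * y)) / (m * PI) ^ 2
  = (cos (m * (PI * (x - y))) / m ^ 2 - cos (m * (PI * (x + y))) / m ^ 2) / PI ^ 2.
Proof. intros Hm.
  replace (m * (PI * (x - y))) with (m * PI * x - m * PI * y) by ring.
  replace (m * (PI * (x + y))) with (m * PI * x + m * PI * y) by ring.
  rewrite cos_minus, cos_plus.
  replace (sqrt 2 * sin (m * PI * x) * (sqrt 2 * sin (m * PI * y)))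
    with (sqrt 2 * sqrt 2 * (sin (m * PI * x) * sin (m * PI * y))) by ring.
  rewrite sqrt_sqrt by lra. field. split; auto. apply PI_neq0.
Qed.

Lemma Kn_Tn N x y : Kn N x y = (Tn N (PI * (x - y)) - Tn N (PI * (x + y))) / PI ^ 2.
Proof. induction N.
  - unfold Kn, Tn. rewrite !sum_OR. unfold phi, lam. apply K_term. apply not_0_INR; lia.
  - unfold Kn in *. rewrite sum_SnR, !Tn_S, IHN. unfold phi, lam. rewrite K_term.
    field. split. apply not_0_INR; lia. apply PI_neq0. apply not_0_INR; lia.
Qed.

Lemma Gf_Fs x y : 0 < x < 1 -> 0 < y < 1 -> x <> y ->
  Gf x y = (Fs (PI * (x - y)) - Fs (PI * (x + y))) / PI ^ 2.
Proof. intros Hx Hy Hxy. pose proof PI_RGT_0.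
  assert (E : Fs (PI * (x - y)) = Fs (PI * Rabs (x - y))).
  { unfold Rabs. destruct (Rcase_abs (x - y)). 
    - rewrite <- (Fs_ext (- (PI * (x - y)))) by (intro; apply Tn_neg). f_equal; ring.
    - reflexivity. }
  assert (A : 0 < Rabs (x - y) < 1).
  { split. apply Rabs_pos_lt. lra. unfold Rabs; destruct (Rcase_abs (x - y)); lra. }
  assert (B1 : 0 < PI * Rabs (x - y) < 2 * PI).
  { split. apply Rmult_lt_0_compat; lra.
    apply Rlt_le_trans with (PI * 1). apply Rmult_lt_compat_l; lra. lra. }
  assert (B2 : 0 < PI * (x + y) < 2 * PI).
  { split. apply Rmult_lt_0_compat; lra.
    replace (2 * PI) with (PI * 2) by ring. apply Rmult_lt_compat_l; lra. }
  rewrite E, (Fs_formula _ B1), (Fs_formula _ B2). unfold Gf. field. apply PI_neq0.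
Qed.

Lemma Gf_Kn_bound N x y : 0 < x < 1 -> 0 < y < 1 -> x <> y ->
  Rabs (Gf x y - Kn N x y) <= 2 * / INR (S N).
Proof. intros Hx Hy Hxy. rewrite Gf_Fs, Kn_Tn by auto.
  pose proof (Fs_bound N (PI * (x - y))). pose proof (Fs_bound N (PI * (x + y))).
  pose proof PI_RGT_0. assert (P2 : 1 <= PI ^ 2) by (pose proof PI2_1; simpl; nra).
  replace ((Fs (PI * (x - y)) - Fs (PI * (x + y))) / PI ^ 2 -
     (Tn N (PI * (x - y)) - Tn N (PI * (x + y))) / PI ^ 2)
   with (((Fs (PI * (x - y)) - Tn N (PI * (x - y))) - (Fs (PI * (x + y)) - Tn N (PI * (x + y)))) / PI ^ 2)
   by (field; apply PI_neq0).
  rewrite Rabs_div by (apply pow_nonzero, PI_neq0). rewrite (Rabs_pos_eq (PI ^ 2)) by lra.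
  apply Rle_trans with (2 * / INR (S N) / PI ^ 2).
  - apply Rmult_le_compat_r. left; apply Rinv_0_lt_compat; lra.
    eapply Rle_trans. apply Rabs_triang. rewrite Rabs_Ropp. lra.
  - pose proof (INR_S_pos N). pose proof (Rinv_0_lt_compat _ H2).
    unfold Rdiv. rewrite <- (Rmult_1_r (2 * / INR (S N))) at 2.
    apply Rmult_le_compat_l. lra. rewrite <- Rinv_1. apply Rinv_le_contravar; lra.
Qed.

Lemma smooth_sum_n (f : nat -> R -> R) N : (forall n, smooth (f n)) ->
  smooth (fun y => sum_n (fun n => f n y) N).
Proof. intros Hf. induction N.
  - apply (smooth_ext (f 0%nat)). intros; rewrite sum_OR; auto. apply Hf.
  - apply (smooth_ext (fun y => sum_n (fun n => f n y) N + f (S N) y)).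
    intros; rewrite sum_SnR; auto. apply smooth_plus; auto.
Qed.

Lemma RInt_sum_n (f : nat -> R -> R) N a b : (forall n, smooth (f n)) ->
  RInt (fun y => sum_n (fun n => f n y) N) a b = @sum_n R_AbelianMonoid (fun n => RInt (f n) a b) N.
Proof. intros Hf. induction N.
  - rewrite sum_OR. apply RInt_ext. intros; rewrite sum_OR; auto.
  - rewrite sum_SnR, <- IHN, <- RInt_plus_sm; auto using smooth_sum_n.
    apply RInt_ext. intros; rewrite sum_SnR; auto.
Qed.

Lemma sum_n_mult_lR (c : R) (u : nat -> R) N : sum_n (fun n => c * u n) N = c * sum_n u N.
Proof. exact (sum_n_mult_l (K:=R_Ring) c u N). Qed.

Lemma lam_pos j : (1 <= j)%nat -> 0 < lam j.
Proof. intros. unfold lam. apply pow_lt. apply Rmult_lt_0_compat. apply lt_0_INR; lia. apply PI_RGT_0. Qed.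

Lemma smooth_id : smooth (fun t => t).
Proof. intros n z. apply ex_derive_n_ext with (f := fun t => t ^ 1). intros; ring. apply ex_derive_n_pow. Qed.

Section GREEN.
Variables (H : R -> R) (a b : R).
Hypotheses (Hs : smooth H) (Hsp : supp H a b) (Ha : 0 < a) (Hb : b < 1).

Lemma Hzero : H 0 = 0. Proof. apply Hsp. lra. Qed.
Lemma Hone : H 1 = 0. Proof. apply Hsp. lra. Qed.

Lemma green x : H x = RInt (fun y => y * (1 - x) * opA H y) 0 x + RInt (fun y => x * (1 - y) * opA H y) x 1.
Proof.
  assert (D1 : forall y, ex_derive H y) by (intros; apply smooth_ex_derive; auto).
  assert (D2 : forall y, ex_derive (Derive H) y) by (intros; apply smooth_ex_derive, smooth_Derive; auto).
  assert (I1 : is_RInt (fun y => y * (1 - x) * opA H y) 0 x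
     (minus ((1 - x) * (H x - x * Derive H x)) ((1 - x) * (H 0 - 0 * Derive H 0)))).
  { apply (is_RInt_derive (V:=R_CompleteNormedModule) (fun y => (1 - x) * (H y - y * Derive H y))).
    - intros y _. unfold opA. auto_derive. split; auto.
      change (Derive_n H 2 y) with (Derive (Derive H) y).
      change (Derive (fun x0 => Derive H x0) y) with (Derive (Derive H) y).
      change (Derive (fun x0 => H x0) y) with (Derive H y). ring.
    - intros y _. apply smooth_continuous. apply smooth_mult. apply smooth_mult.
      apply smooth_id. apply smooth_const. apply opA_smooth; auto. }
  assert (I2 : is_RInt (fun y => x * (1 - y) * opA H y) x 1
     (minus (x * (- (1 - 1) * Derive H 1 - H 1)) (x * (- (1 - x) * Derive H x - H x)))).
  { apply (is_RInt_derive (V:=R_CompleteNormedModule) (fun y => x * (- (1 - y) * Derive H y - H y))).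
    - intros y _. unfold opA. auto_derive. split; auto.
      change (Derive_n H 2 y) with (Derive (Derive H) y).
      change (Derive (fun x0 => Derive H x0) y) with (Derive (Derive H) y).
      change (Derive (fun x0 => H x0) y) with (Derive H y). ring.
    - intros y _. apply smooth_continuous. apply smooth_mult. apply smooth_mult.
      apply smooth_const. apply smooth_minus. apply smooth_const. apply smooth_id.
      apply opA_smooth; auto. }
  rewrite (is_RInt_unique _ _ _ _ I1), (is_RInt_unique _ _ _ _ I2).
  rewrite Hzero, Hone. unfold minus, plus, opp; simpl. ring.
Qed.
End GREEN.

Definition SN (H : R -> R) (N : nat) (x : R) : R :=
  sum_n (fun n => inner H (phi (S n)) * phi (S n) x) N.

Lemma SN_smooth H N : smooth (SN H N).
Proof. apply (smooth_sum_n (fun n x => inner H (phi (S n)) * phi (S n) x)).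
  intros n. apply smooth_scal, phi_smooth. Qed.

Lemma Kn_smooth N x : smooth (fun y => Kn N x y).
Proof. apply (smooth_sum_n (fun n y => phi (S n) x * phi (S n) y / lam (S n))).
  intros n. apply (smooth_ext (fun y => (phi (S n) x / lam (S n)) * phi (S n) y)).
  intros; unfold Rdiv; ring. apply smooth_scal, phi_smooth. Qed.

Lemma ex_RInt_abs_sm f a b : smooth f -> ex_RInt (fun y => Rabs (f y)) a b.
Proof. intros H. apply (ex_RInt_continuous (V:=R_CompleteNormedModule)). intros.
  apply continuous_Rabs_comp, smooth_continuous, H. Qed.

Lemma piece_bound D g l r c : l <= r -> smooth D -> smooth g ->
  (forall y, l < y < r -> Rabs (D y) <= c * Rabs (g y)) ->
  Rabs (RInt D l r) <= c * RInt (fun y => Rabs (g y)) l r.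
Proof. intros Hlr HD Hg Hb. eapply Rle_trans. apply abs_RInt_le; auto. apply ex_RInt_sm; auto.
  rewrite <- (RInt_scal (V:=R_CompleteNormedModule) (fun y => Rabs (g y))) by (apply ex_RInt_abs_sm; auto).
  apply RInt_le; auto. apply ex_RInt_abs_sm; auto.
  apply (ex_RInt_scal (V:=R_NormedModule) (fun y => Rabs (g y))). apply ex_RInt_abs_sm; auto.
Qed.

Section PARS.
Variables (H : R -> R) (a b : R).
Hypotheses (Hs : smooth H) (Hsp : supp H a b) (Ha : 0 < a) (Hb : b < 1).

Lemma b_AH j : inner (opA H) (phi j) = lam j * inner H (phi j).
Proof. rewrite (opA_selfadj H (phi j) a b); auto using phi_smooth.
  rewrite opA_phi. apply inner_scal_r; auto using phi_smooth. Qed.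

Lemma SN_RInt N x : SN H N x = RInt (fun y => Kn N x y * opA H y) 0 1.
Proof.
  rewrite (RInt_ext _ (fun y => sum_n (fun n => phi (S n) x / lam (S n) * (phi (S n) y * opA H y)) N)).
  rewrite RInt_sum_n.
  - unfold SN. apply sum_n_ext. intro n. rewrite RInt_scal_sm.
    change (RInt (fun y => phi (S n) y * opA H y) 0 1) with (inner (phi (S n)) (opA H)).
    rewrite (inner_sym (phi (S n))), b_AH. req. field. apply Rgt_not_eq, lam_pos; lia.
    apply smooth_mult. apply phi_smooth. apply opA_smooth; auto.
  - intros n. apply smooth_scal, smooth_mult. apply phi_smooth. apply opA_smooth; auto.
  - intros y _. unfold Kn. rewrite <- (sum_n_mult_r (K:=R_Ring)). apply sum_n_ext. intro n.
    unfold mult; simpl. req. field. apply Rgt_not_eq, lam_pos; lia.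
Qed.
Lemma SN_bound N x : 0 < x < 1 ->
  Rabs (H x - SN H N x) <= 2 * / INR (S N) * RInt (fun y => Rabs (opA H y)) 0 1.
Proof. intros Hx.
  assert (SA : smooth (opA H)) by (apply opA_smooth; auto).
  assert (SK : smooth (fun y => Kn N x y * opA H y)) by (apply smooth_mult; auto using Kn_smooth).
  assert (SL : smooth (fun y => y * (1 - x) * opA H y)).
  { apply smooth_mult; auto. apply smooth_mult. apply smooth_id. apply smooth_const. }
  assert (SR : smooth (fun y => x * (1 - y) * opA H y)).
  { apply smooth_mult; auto. apply smooth_mult. apply smooth_const. apply smooth_minus. apply smooth_const. apply smooth_id. }
  rewrite (green H a b) at 1 by auto. rewrite SN_RInt.
  rewrite <- (RInt_Chasles (V:=R_CompleteNormedModule) _ 0 x 1) by (apply ex_RInt_sm; auto).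
  rewrite <- (RInt_Chasles (V:=R_CompleteNormedModule) (fun y => Rabs (opA H y)) 0 x 1) by (apply ex_RInt_abs_sm; auto).
  change (plus ?u ?v) with (u + v).
  replace (RInt (fun y => y * (1 - x) * opA H y) 0 x + RInt (fun y => x * (1 - y) * opA H y) x 1 -
     (RInt (fun y => Kn N x y * opA H y) 0 x + RInt (fun y => Kn N x y * opA H y) x 1))
   with (RInt (fun y => y * (1 - x) * opA H y - Kn N x y * opA H y) 0 x +
         RInt (fun y => x * (1 - y) * opA H y - Kn N x y * opA H y) x 1)
   by (rewrite !RInt_minus_sm; auto; ring).
  rewrite Rmult_plus_distr_l. eapply Rle_trans. apply Rabs_triang.
  apply Rplus_le_compat.
  - apply piece_bound; auto. lra. apply smooth_minus; auto.
    intros y Hy. replace (y * (1 - x) * opA H y - Kn N x y * opA H y) with ((Gf x y - Kn N x y) * opA H y).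
    rewrite Rabs_mult. apply Rmult_le_compat_r. apply Rabs_pos. apply Gf_Kn_bound; lra.
    unfold Gf. rewrite Rabs_pos_eq by lra. field.
  - apply piece_bound; auto. lra. apply smooth_minus; auto.
    intros y Hy. replace (x * (1 - y) * opA H y - Kn N x y * opA H y) with ((Gf x y - Kn N x y) * opA H y).
    rewrite Rabs_mult. apply Rmult_le_compat_r. apply Rabs_pos. apply Gf_Kn_bound; lra.
    unfold Gf. rewrite Rabs_minus_sym, Rabs_pos_eq by lra. field.
Qed.

Lemma squeeze_lim (u : nat -> R) (c C : R) : (forall N, Rabs (c - u N) <= C * / INR (S N)) -> is_lim_seq u c.
Proof. intros HB.
  apply is_lim_seq_le_le with (u := fun N => c - C * / INR (S N)) (w := fun N => c + C * / INR (S N)).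
  - intros N. specialize (HB N). apply Rabs_le_between in HB. lra.
  - replace (Finite c) with (Finite (c - 0)) by (f_equal; ring). apply is_lim_seq_minus'. apply is_lim_seq_const. apply inv_lim.
  - replace (Finite c) with (Finite (c + 0)) by (f_equal; ring). apply is_lim_seq_plus'. apply is_lim_seq_const. apply inv_lim.
Qed.

Lemma parseval F : smooth F ->
  is_series (fun n => inner F (phi (S n)) * inner H (phi (S n))) (inner F H).
Proof. intros SF.
  set (CH := RInt (fun y => Rabs (opA H y)) 0 1).
  set (CF := RInt (fun y => Rabs (F y)) 0 1).
  assert (E : forall N, sum_n (fun n => inner F (phi (S n)) * inner H (phi (S n))) N =
     RInt (fun x => F x * SN H N x) 0 1).
  { intro N. rewrite (RInt_ext _ (fun x => sum_n (fun n => inner H (phi (S n)) * (F x * phi (S n) x)) N)).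
    rewrite RInt_sum_n. apply sum_n_ext. intro n. rewrite RInt_scal_sm.
    change (RInt (fun x => F x * phi (S n) x) 0 1) with (inner F (phi (S n))). req. ring.
    apply smooth_mult; auto using phi_smooth.
    intro n. apply smooth_scal, smooth_mult; auto using phi_smooth.
    intros x _. unfold SN. rewrite <- sum_n_mult_lR. apply sum_n_ext. intro n. req. ring. }
  assert (B : forall N, Rabs (inner F H - sum_n (fun n => inner F (phi (S n)) * inner H (phi (S n))) N)
     <= (2 * CH * CF) * / INR (S N)).
  { intro N. rewrite E. unfold inner. rewrite <- RInt_minus_sm; auto using smooth_mult, SN_smooth.
    replace (2 * CH * CF * / INR (S N)) with ((2 * / INR (S N) * CH) * CF) by ring.
    apply piece_bound. lra. apply smooth_minus; auto using smooth_mult, SN_smooth. auto.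
    intros y Hy. replace (F y * H y - F y * SN H N y) with (F y * (H y - SN H N y)) by ring.
    rewrite Rabs_mult, Rmult_comm. apply Rmult_le_compat_r. apply Rabs_pos.
    apply SN_bound; auto. }
  apply (squeeze_lim _ _ _ B).
Qed.
End PARS.

Lemma pow_swap (x y : R) q : (x - y) ^ q = (-1) ^ q * (y - x) ^ q.
Proof. rewrite <- Rpow_mult_distr. f_equal. ring. Qed.

Lemma m1sq q : (-1) ^ q * (-1) ^ q = 1.
Proof. rewrite <- Rpow_mult_distr. replace (-1 * -1) with 1 by ring. apply pow1. Qed.

Theorem propositionA2 (K p : nat) (mu : R -> R) :
  (1 <= K)%nat -> (1 <= p)%nat -> smooth_compact_01 mu ->
  AK p K mu =
    (-1) ^ (p - 1) / 2 *
      inner (comm (adA (p - 1) mu) (adA p mu) (phi 1)) (phi K).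
Proof.
  intros HK Hp [Hm [a [b [Ha [Hab [Hb Hs]]]]]].
  assert (Sm : smooth mu) by exact Hm.
  assert (Sp : supp mu a b) by exact Hs.
  destruct p as [|q]; [lia|]. replace (S q - 1)%nat with q by lia.
  set (B := adA q mu). set (C := adA (S q) mu).
  assert (SB : forall f, smooth f -> smooth (B f)) by (intros; apply adA_smooth; auto).
  assert (SC : forall f, smooth f -> smooth (C f)) by (intros; apply adA_smooth; auto).
  assert (PB : forall f, supp (B f) a b) by (intros; apply adA_supp; auto).
  assert (PC : forall f, supp (C f) a b) by (intros; apply adA_supp; auto).
  change (inner (comm B C (phi 1)) (phi K)) with
    (inner (fun x => B (C (phi 1)) x - C (B (phi 1)) x) (phi K)).
  rewrite inner_minus; auto using phi_smooth.
  pose proof (ad_adj mu a b Sm Sp Ha Hb q (C (phi 1)) (phi K) (SC _ (phi_smooth 1)) (PC _) (phi_smooth K)) as E1.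
  pose proof (ad_adj mu a b Sm Sp Ha Hb (S q) (B (phi 1)) (phi K) (SB _ (phi_smooth 1)) (PB _) (phi_smooth K)) as E2.
  change (adA q mu) with B in E1, E2. change (adA (S q) mu) with C in E1, E2.
  rewrite E1, E2.
  set (L1 := inner (C (phi 1)) (B (phi K))).
  set (L2 := inner (B (phi 1)) (C (phi K))).
  assert (S1 : is_series (fun n => (lam (S n) - lam 1) ^ (S q) * (lam (S n) - lam K) ^ q * cj mu K (S n)) L1).
  { eapply is_series_ext; [|apply (parseval (B (phi K)) a b); auto using phi_smooth].
    intro n. unfold B, C. rewrite !(ad_phi mu a b Sm Sp Ha Hb). unfold cj, mulop. match goal with |- ?x = ?y => change (@eq R x y) end. ring. }
  assert (S2 : is_series (fun n => (lam (S n) - lam 1) ^ q * (lam (S n) - lam K) ^ (S q) * cj mu K (S n)) L2).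
  { eapply is_series_ext; [|apply (parseval (C (phi K)) a b); auto using phi_smooth].
    intro n. unfold B, C. rewrite !(ad_phi mu a b Sm Sp Ha Hb). unfold cj, mulop. match goal with |- ?x = ?y => change (@eq R x y) end. ring. }
  assert (S3 := is_series_scal_l ((-1) ^ q / 2) _ _ (is_series_plus _ _ _ _ S1 S2)).
  unfold AK. rewrite (is_series_unique _ ((-1) ^ q / 2 * (L1 + L2))).
  - replace (S q - 1)%nat with q by lia.
    simpl. transitivity ((-1) ^ q * (-1) ^ q * ((L1 + L2) / 2)). field.
    pose proof (m1sq q) as E. set (s := (-1) ^ q) in *.
    transitivity (s * s * ((L1 + L2) / 2)). reflexivity. field.
  - eapply is_series_ext; [|exact S3]. intro n. unfold AKterm. replace (S q - 1)%nat with q by lia.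
    rewrite (pow_swap (lam K) (lam (S n))). unfold plus, scal; simpl. unfold mult; simpl. field.
Qed.
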